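(* Let $H=\mathbb C^m$ and let $\phi\colon M_n\to M_m$ be linear. Then $\phi$ is positive if and only if $C_{\phi^t}\in P(M_n,S(H))$, if and only if $C_\phi\in P(M_n,S(H))$. Hence $P(M_n,S(H))=\{C_\phi:\phi\colon M_n\to M_m \text{ linear and positive}\}$.
   Context: $M_n$ denotes the complex $n\times n$ matrices, $(e_{ij})$ a complete set of matrix units of $M_n$, $t$ the transpose map, $\phi^t=t\circ\phi\circ t$, and $C_\phi=\sum_{i,j}e_{ij}\otimes\phi(e_{ij})\in M_n\otimes M_m$ the Choi matrix of $\phi$. $S(H)$ is the closed cone of linear maps $M_m\to M_m$ generated by maps $x\mapsto\sum_{i=1}^k\omega_i(x)a_i$ with $\omega_i$ states of $M_m$ and $a_i\in M_m$ positive. $P(M_n,S(H))=\{x\in M_n\otimes M_m:(\iota\otimes\alpha)(x)\ge0\ \forall\alpha\in S(H)\}$, where $\iota$ is the identity map of $M_n$. *)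

(* Defs.v *)
From HB Require Import structures.
From mathcomp Require Import all_boot all_order all_algebra.
From mathcomp Require Import complex mxtens.
Set Implicit Arguments.
Unset Strict Implicit.
Unset Printing Implicit Defensive.
Import Order.TTheory GRing.Theory Num.Theory.
Local Open Scope ring_scope.

(* Complex numbers: C = R[i] for a real closed field R (R = the reals gives
   the usual complex numbers). *)

Section Defs.
Variable R : rcfType.
Local Notation C := R[i].

Definition adjmx {p q : nat} (A : 'M[C]_(p, q)) : 'M[C]_(q, p) :=
  map_mx (fun z => z^*) A^T.

Definition psd {p : nat} (A : 'M[C]_p) : Prop :=
  adjmx A = A /\ forall v : 'cV[C]_p, 0 <= (adjmx v *m A *m v) 0 0.

Definition is_linear_map {p q r s : nat} (f : 'M[C]_(p, q) -> 'M[C]_(r, s)) : Prop :=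
  forall (a : C) x y, f (a *: x + y) = a *: f x + f y.

Definition positive_map {n m : nat} (phi : 'M[C]_n -> 'M[C]_m) : Prop :=
  forall x, psd x -> psd (phi x).

Definition is_state {m : nat} (w : 'M[C]_m -> C) : Prop :=
  (forall (a : C) x y, w (a *: x + y) = a * w x + w y) /\
  (forall x, psd x -> 0 <= w x) /\ w 1%:M = 1.

Definition transpose_map {n m : nat} (phi : 'M[C]_n -> 'M[C]_m) : 'M[C]_n -> 'M[C]_m :=
  fun x => (phi x^T)^T.

(* M_n (x) M_m is realized as 'M_(n*m) via the Kronecker product *t,
   e_ij (x) b = delta_mx i j *t b. *)
Definition choi {n m : nat} (phi : 'M[C]_n -> 'M[C]_m) : 'M[C]_(n * m) :=
  \sum_(i < n) \sum_(j < n) (delta_mx i j *t phi (delta_mx i j)).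

(* the (i,j) block x_ij of x = sum_ij e_ij (x) x_ij *)
Definition block {n m : nat} (x : 'M[C]_(n * m)) (i j : 'I_n) : 'M[C]_m :=
  \matrix_(k, l) x (mxtens_index (i, k)) (mxtens_index (j, l)).

Definition id_tens {n m : nat} (alpha : 'M[C]_m -> 'M[C]_m) (x : 'M[C]_(n * m))
  : 'M[C]_(n * m) :=
  \sum_(i < n) \sum_(j < n) (delta_mx i j *t alpha (block x i j)).

Definition in_gen_cone {m : nat} (beta : 'M[C]_m -> 'M[C]_m) : Prop :=
  exists (k : nat) (w : 'I_k -> 'M[C]_m -> C) (a : 'I_k -> 'M[C]_m),
    (forall t, is_state (w t)) /\ (forall t, psd (a t)) /\
    forall x, beta x = \sum_(t < k) (w t x *: a t).

(* S(H): closure (in the finite-dimensional space of linear maps M_m -> M_m,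
   coordinates = entries of the images of the matrix units) of the cone. *)
Definition SH {m : nat} (alpha : 'M[C]_m -> 'M[C]_m) : Prop :=
  is_linear_map alpha /\
  forall eps : R, 0 < eps -> exists beta, in_gen_cone beta /\
    forall (k l : 'I_m) (p q : 'I_m),
      `| alpha (delta_mx k l) p q - beta (delta_mx k l) p q | < (eps%:C)%C.

Definition PSH {n m : nat} (x : 'M[C]_(n * m)) : Prop :=
  forall alpha : 'M[C]_m -> 'M[C]_m, SH alpha -> psd (id_tens alpha x).

End Defs.

(* Main.v *)
Require Import Defs.
From HB Require Import structures.
From mathcomp Require Import all_boot all_order all_algebra.
From mathcomp Require Import complex mxtens spectral ring lra.
Import Order.TTheory GRing.Theory Num.Theory.
Local Open Scope ring_scope.
Set Implicit Arguments.
Unset Strict Implicit.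
Unset Printing Implicit Defensive.

Section Work.
Variable R : rcfType.
Local Notation C := R[i].

Definition qf {p} (M : 'M[C]_p) (v : 'cV[C]_p) : C := (adjmx v *m M *m v) 0 0.

Lemma qfE p (M : 'M[C]_p) v :
  qf M v = \sum_i \sum_j (v i 0)^* * M i j * v j 0.
Proof.
rewrite /qf /adjmx mxE; under eq_bigr => j _ do rewrite mxE mulr_suml.
rewrite exchange_big /=; apply: eq_bigr => i _; apply: eq_bigr => j _.
by rewrite !mxE.
Qed.

Lemma sum_tens n m (F : 'I_(n * m) -> C) :
  \sum_k F k = \sum_(i < n) \sum_(p < m) F (mxtens_index (i, p)).
Proof.
rewrite pair_big /=; apply: reindex => /=.
exists (@mxtens_unindex n m) => k _.
  by case: k => ? ?; rewrite mxtens_indexK.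
by rewrite -surjective_pairing mxtens_unindexK.
Qed.


Lemma adjmxD p q (A B : 'M[C]_(p, q)) : adjmx (A + B) = adjmx A + adjmx B.
Proof. by rewrite /adjmx linearD /= map_mxD. Qed.

Lemma adjmxZ p q (a : C) (A : 'M[C]_(p, q)) : adjmx (a *: A) = a^* *: adjmx A.
Proof. by rewrite /adjmx linearZ /= map_mxZ. Qed.

Definition Bf {p} (M : 'M[C]_p) (u w : 'cV[C]_p) : C := (adjmx u *m M *m w) 0 0.

Lemma Bf_delta p (M : 'M[C]_p) k l :
  Bf M (delta_mx k 0) (delta_mx l 0) = M k l.
Proof.
rewrite /Bf; have -> : adjmx (delta_mx k 0 : 'cV[C]_p) = delta_mx 0 k.
  apply/matrixP => i j; rewrite !mxE.
  by case: (j == k); case: (i == 0); rewrite /= ?conjC1 ?conjC0.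
by rewrite -rowE -colE !mxE.
Qed.

Lemma BfDl p (M : 'M[C]_p) u1 u2 w : Bf M (u1 + u2) w = Bf M u1 w + Bf M u2 w.
Proof. by rewrite /Bf adjmxD !mulmxDl [in LHS]mxE. Qed.
Lemma BfDr p (M : 'M[C]_p) u w1 w2 : Bf M u (w1 + w2) = Bf M u w1 + Bf M u w2.
Proof. by rewrite /Bf !mulmxDr [in LHS]mxE. Qed.
Lemma BfZl p (M : 'M[C]_p) a u w : Bf M (a *: u) w = a^* * Bf M u w.
Proof. by rewrite /Bf adjmxZ -!scalemxAl [in LHS]mxE. Qed.
Lemma BfZr p (M : 'M[C]_p) a u w : Bf M u (a *: w) = a * Bf M u w.
Proof. by rewrite /Bf -!scalemxAr [in LHS]mxE. Qed.

Lemma qfBf p (M : 'M[C]_p) v : qf M v = Bf M v v. Proof. by []. Qed.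

Lemma qf_pol p (M : 'M[C]_p) k l (a : C) :
  qf M (delta_mx k 0 + a *: delta_mx l 0) =
  M k k + a * M k l + a^* * M l k + a^* * a * M l l.
Proof.
rewrite qfBf !(BfDl, BfDr, BfZl, BfZr) !Bf_delta.
by rewrite mulrDr mulrA addrA.
Qed.


Lemma qf_herm p (M : 'M[C]_p) : (forall v, 0 <= qf M v) -> adjmx M = M.
Proof.
move=> H; apply/matrixP => k l; rewrite /adjmx !mxE.
have Hd j : (M j j)^* = M j j.
  by have := H (delta_mx j 0); rewrite qfBf Bf_delta => /geC0_conj.
have h a : a^* * (M k l)^* + a * (M l k)^* = a * M k l + a^* * M l k.
  have := geC0_conj (H (delta_mx k 0 + a *: delta_mx l 0)); rewrite qf_pol.
  rewrite !rmorphD !rmorphM /= !conjCK !Hd (mulrC a a^*) -!addrA => /addrI.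
  by rewrite !addrA => /addIr.
have h1 := h 1; have h2 := h 'i.
rewrite conjC1 !mul1r in h1; rewrite conjCi in h2.
have -> : (M l k)^* = (((M k l)^* + (M l k)^*) +
   (- 'i * (M k l)^* + 'i * (M l k)^*) / 'i) / 2%:R.
  by field; rewrite ?neq0Ci ?pnatr_eq0.
rewrite h1 h2; field; by rewrite ?neq0Ci ?pnatr_eq0.
Qed.

Lemma psdP p (M : 'M[C]_p) : psd M <-> forall v, 0 <= qf M v.
Proof. by split => [[]//|H]; split => //; apply: qf_herm. Qed.


Lemma adjmx_delta p k : adjmx (delta_mx k 0 : 'cV[C]_p) = delta_mx 0 k.
Proof.
apply/matrixP => i j; rewrite !mxE.
by case: (j == k); case: (i == 0); rewrite /= ?conjC1 ?conjC0.
Qed.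

Lemma adjmxM p q r (A : 'M[C]_(p, q)) (B : 'M[C]_(q, r)) :
  adjmx (A *m B) = adjmx B *m adjmx A.
Proof. by rewrite /adjmx trmx_mul map_mxM. Qed.

Lemma adjmxK p q (A : 'M[C]_(p, q)) : adjmx (adjmx A) = A.
Proof. by apply/matrixP => i j; rewrite !mxE conjCK. Qed.

Lemma psd_decomp p (a : 'M[C]_p) : psd a ->
  exists (d : 'I_p -> C) (P : 'M[C]_p), (forall s, 0 <= d s) /\
    forall k l, a k l = \sum_s d s * (P s k)^* * P s l.
Proof.
move=> [ha hq].
have Nn : a \is normalmx.
  apply/normalmxP; change (a *m adjmx a = adjmx a *m a); by rewrite ha.
have Pu := spectral_unitarymx a.
have E := orthomx_spectralP Nn.
rewrite invmx_unitary // in E.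
set P := spectralmx a in E Pu *; set D := spectral_diag a in E *.
exists (fun s => D 0 s), P; split.
- move=> s.
  have ED : diag_mx D = P *m a *m adjmx P.
    rewrite {1}E !mulmxA.
    have -> : P *m adjmx P = 1%:M by apply/unitarymxP.
    by rewrite mul1mx; symmetry; exact: mulmxtVK.
  have -> : D 0 s = diag_mx D s s by rewrite mxE eqxx mulr1n.
  rewrite ED -Bf_delta /Bf adjmx_delta.
  have := hq (adjmx P *m delta_mx s 0).
  rewrite adjmxM adjmxK adjmx_delta !mulmxA; move=> h; exact: h.
- move=> k l; rewrite {1}E mul_mx_diag mxE; apply: eq_bigr => s _.
  by rewrite !mxE (mulrC (_^*)).
Qed.


Lemma schur n m (W : 'I_n -> 'I_n -> C) (a : 'M[C]_m) (v : 'I_n -> 'I_m -> C) :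
  (forall c : 'I_n -> C, 0 <= \sum_i \sum_j (c i)^* * W i j * c j) -> psd a ->
  0 <= \sum_i \sum_p \sum_j \sum_q (v i p)^* * W i j * a p q * v j q.
Proof.
move=> HW /psd_decomp [d [P [hd ha]]].
pose c s i := \sum_q P s q * v i q.
have -> : \sum_i \sum_p \sum_j \sum_q (v i p)^* * W i j * a p q * v j q =
   \sum_s d s * \sum_i \sum_j (c s i)^* * W i j * c s j.
  transitivity (\sum_i \sum_p \sum_j \sum_q \sum_s
     d s * ((P s p)^* * (v i p)^*) * W i j * (P s q * v j q)).
    apply: eq_bigr => i _; apply: eq_bigr => p _; apply: eq_bigr => j _.
    apply: eq_bigr => q _; rewrite ha mulr_sumr mulr_suml.
    by apply: eq_bigr => s _; ring.
  under eq_bigr => i _ do under eq_bigr => p _ do under eq_bigr => j _ do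
    rewrite exchange_big.
  under eq_bigr => i _ do under eq_bigr => p _ do rewrite exchange_big.
  under eq_bigr => i _ do rewrite exchange_big.
  rewrite exchange_big; apply: eq_bigr => s _.
  rewrite mulr_sumr; apply: eq_bigr => i _; rewrite exchange_big.
  rewrite mulr_sumr; apply: eq_bigr => j _.
  rewrite /c rmorph_sum /= !mulr_suml mulr_sumr; apply: eq_bigr => p _.
  rewrite !mulr_sumr; apply: eq_bigr => q _; rewrite rmorphM /=; ring.
by apply: sumr_ge0 => s _; apply: mulr_ge0.
Qed.


Section Lin.
Variables (p q : nat) (f : 'M[C]_p -> 'M[C]_q).
Hypothesis Hf : is_linear_map f.
Lemma lin0 : f 0 = 0.
Proof. by have := Hf (-1) 0 0; rewrite scaler0 addr0 scaleN1r addNr. Qed.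
Lemma linD x y : f (x + y) = f x + f y.
Proof. by have := Hf 1 x y; rewrite !scale1r. Qed.
Lemma linZ a x : f (a *: x) = a *: f x.
Proof. by have := Hf a x 0; rewrite !addr0 lin0 addr0. Qed.
Lemma lin_sum (I : Type) (r : seq I) (P : pred I) (X : I -> 'M[C]_p) :
  f (\sum_(i <- r | P i) X i) = \sum_(i <- r | P i) f (X i).
Proof. exact: (big_morph f linD lin0). Qed.
End Lin.

Section LinS.
Variables (p : nat) (f : 'M[C]_p -> C).
Hypothesis Hf : forall (a : C) x y, f (a *: x + y) = a * f x + f y.
Lemma slin0 : f 0 = 0.
Proof. by have := Hf (-1) 0 0; rewrite scaler0 addr0 mulN1r addNr. Qed.
Lemma slinD x y : f (x + y) = f x + f y.
Proof. by have := Hf 1 x y; rewrite scale1r mul1r. Qed.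
Lemma slinZ a x : f (a *: x) = a * f x.
Proof. by have := Hf a x 0; rewrite !addr0 slin0 addr0. Qed.
Lemma slin_sum (I : Type) (r : seq I) (P : pred I) (X : I -> 'M[C]_p) :
  f (\sum_(i <- r | P i) X i) = \sum_(i <- r | P i) f (X i).
Proof. exact: (big_morph f slinD slin0). Qed.
End LinS.

Lemma qf_lin p (v : 'cV[C]_p) (a : C) x y :
  qf (a *: x + y) v = a * qf x v + qf y v.
Proof.
by rewrite /qf mulmxDr mulmxDl -scalemxAr -scalemxAl [in LHS]mxE [X in X + _]mxE.
Qed.

Definition blk n m (Y : 'I_n -> 'I_n -> 'M[C]_m) : 'M[C]_(n * m) :=
  \sum_i \sum_j (delta_mx i j *t Y i j).

Lemma sum_delta2 p q (F : 'I_p -> 'I_q -> C) k l :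
  \sum_i \sum_j delta_mx k l i j * F i j = F k l.
Proof.
rewrite (bigD1 k) //= (bigD1 l) //= mxE !eqxx mul1r big1 => [|j /negbTE nj].
  rewrite addr0 big1 ?addr0 // => i /negbTE ni.
  by rewrite big1 // => j _; rewrite mxE ni mul0r.
by rewrite mxE nj andbF mul0r.
Qed.

Lemma blkE n m (Y : 'I_n -> 'I_n -> 'M[C]_m) i j p q :
  blk Y (mxtens_index (i, p)) (mxtens_index (j, q)) = Y i j p q.
Proof.
rewrite /blk summxE; transitivity (\sum_k \sum_l delta_mx i j k l * Y k l p q); last exact: sum_delta2.
apply: eq_bigr => k _; rewrite summxE; apply: eq_bigr => l _.
rewrite tensmxE !mxE.
by rewrite (eq_sym i) (eq_sym j).
Qed.

Lemma qf_blk n m (Y : 'I_n -> 'I_n -> 'M[C]_m) v :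
  qf (blk Y) v = \sum_i \sum_p \sum_j \sum_q
    (v (mxtens_index (i, p)) 0)^* * Y i j p q * v (mxtens_index (j, q)) 0.
Proof.
rewrite qfE sum_tens; apply: eq_bigr => i _; apply: eq_bigr => p _.
by rewrite sum_tens; apply: eq_bigr => j _; apply: eq_bigr => q _; rewrite blkE.
Qed.

Lemma block_blk n m (Y : 'I_n -> 'I_n -> 'M[C]_m) i j : block (blk Y) i j = Y i j.
Proof. by apply/matrixP => p q; rewrite mxE blkE. Qed.

Lemma blk_block n m (x : 'M[C]_(n * m)) : blk (block x) = x.
Proof.
apply/matrixP => k l; rewrite -[k]mxtens_unindexK -[l]mxtens_unindexK.
case: (mxtens_unindex k) => i p; case: (mxtens_unindex l) => j q.
by rewrite blkE mxE.
Qed.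

Lemma id_tens_blk n m (alpha : 'M[C]_m -> 'M[C]_m) (Y : 'I_n -> 'I_n -> 'M[C]_m) :
  id_tens alpha (blk Y) = blk (fun i j => alpha (Y i j)).
Proof.
by rewrite /id_tens; apply: eq_bigr => i _; apply: eq_bigr => j _; rewrite block_blk.
Qed.


Lemma gen_lin m (beta : 'M[C]_m -> 'M[C]_m) : in_gen_cone beta -> is_linear_map beta.
Proof.
move=> [k [w [a [hw [ha hb]]]]] c x y; rewrite !hb scaler_sumr -big_split.
by apply: eq_bigr => t _; have [hl _] := hw t; rewrite hl scalerDl scalerA.
Qed.

Lemma rank1_psd p (c : 'I_p -> C) : psd (\matrix_(i, j) ((c i)^* * c j)).
Proof.
apply/psdP => u; rewrite qfE.
suff -> : \sum_i \sum_j (u i 0)^* * (\matrix_(i, j) ((c i)^* * c j)) i j * u j 0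
   = (\sum_k c k * u k 0)^* * (\sum_l c l * u l 0).
  by rewrite mulrC mul_conjC_ge0.
rewrite rmorph_sum mulr_suml; apply: eq_bigr => k _; rewrite mulr_sumr.
by apply: eq_bigr => l _; rewrite mxE rmorphM /=; ring.
Qed.

Lemma quadW n m (psi : 'M[C]_n -> 'M[C]_m) (w : 'M[C]_m -> C) :
  is_linear_map psi -> positive_map psi -> is_state w ->
  forall c : 'I_n -> C, 0 <= \sum_i \sum_j (c i)^* * w (psi (delta_mx i j)) * c j.
Proof.
move=> Hl Hp [wl [wp _]] c.
have -> : \sum_i \sum_j (c i)^* * w (psi (delta_mx i j)) * c j =
     w (psi (\matrix_(i, j) ((c i)^* * c j))).
  rewrite [X in psi X]matrix_sum_delta (lin_sum Hl) (slin_sum wl).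
  apply: eq_bigr => i _; rewrite (lin_sum Hl) (slin_sum wl).
  by apply: eq_bigr => j _; rewrite (linZ Hl) (slinZ wl) mxE mulrAC.
by apply: wp; apply: Hp; apply: rank1_psd.
Qed.

Lemma posA n m (psi : 'M[C]_n -> 'M[C]_m) beta :
  is_linear_map psi -> positive_map psi -> in_gen_cone beta ->
  forall v, 0 <= qf (blk (fun i j => beta (psi (delta_mx i j)))) v.
Proof.
move=> Hl Hp [k [w [a [hw [ha hb]]]]] v; rewrite qf_blk.
pose V i p := v (mxtens_index (i, p)) 0.
have -> : \sum_i \sum_p \sum_j \sum_q
    (v (mxtens_index (i, p)) 0)^* * beta (psi (delta_mx i j)) p q *
      v (mxtens_index (j, q)) 0 =
   \sum_t \sum_i \sum_p \sum_j \sum_q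
     (V i p)^* * w t (psi (delta_mx i j)) * a t p q * V j q.
  transitivity (\sum_i \sum_p \sum_j \sum_q \sum_t
     (V i p)^* * w t (psi (delta_mx i j)) * a t p q * V j q).
    apply: eq_bigr => i _; apply: eq_bigr => p _; apply: eq_bigr => j _.
    apply: eq_bigr => q _; rewrite hb summxE mulr_sumr mulr_suml.
    by apply: eq_bigr => t _; rewrite mxE !mulrA.
  under eq_bigr => i _ do under eq_bigr => p _ do under eq_bigr => j _ do
    rewrite exchange_big.
  under eq_bigr => i _ do under eq_bigr => p _ do rewrite exchange_big.
  under eq_bigr => i _ do rewrite exchange_big.
  by rewrite exchange_big.
apply: sumr_ge0 => t _.
apply: (schur (W := fun i j => w t (psi (delta_mx i j)))); last exact: ha.
exact: (quadW Hl Hp (hw t)).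
Qed.


Lemma ge0_real (x : C) : 0 <= x -> exists2 r : R, 0 <= r & x = (r%:C)%C.
Proof.
case: x => a b; rewrite lecE /= => /andP[/eqP hb ha].
by exists a => //; rewrite hb.
Qed.

Lemma approx_ge0 (z K : C) : 0 <= K ->
  (forall eps : R, 0 < eps -> exists r, 0 <= r /\ `|z - r| <= K * (eps%:C)%C) ->
  0 <= z.
Proof.
move=> /ge0_real [Kr hKr ->] H.
have /ge0_real [dr hdr Edr] : 0 <= `|z - `|z| | by [].
have Hd e : 0 < e -> dr <= e.
  move=> he.
  have hden : 0 < 2 * Kr + 1 by lra.
  have heps : 0 < e / (2 * Kr + 1) by apply: divr_gt0.
  have [r [hr hzr]] := H _ heps.
  have h3 : `|z - `|z| | <= 2 * ((Kr%:C)%C * ((e / (2 * Kr + 1))%:C)%C).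
    apply: le_trans (ler_distD r _ _) _.
    have h2 : `|r - `|z| | <= `|z - r|.
      by rewrite -{1}(ger0_norm hr) distrC; apply: ler_dist_dist.
    apply: le_trans (lerD (lexx _) h2) _.
    by rewrite mulr_natl mulr2n lerD.
  have : `|z - `|z| | <= ((2 * Kr * (e / (2 * Kr + 1)))%:C)%C.
    by rewrite -mulrA rmorphM rmorph_nat rmorphM.
  rewrite Edr lecR => h; apply: le_trans h _.
  rewrite mulrA ler_pdivrMr //; nra.
have dr0 : dr = 0.
  apply/eqP; rewrite eq_le hdr andbT; apply/negPn/negP; rewrite -ltNge => hpos.
  by have := Hd (dr / 2) (divr_gt0 hpos (ltr0Sn _ 1)); lra.
move: Edr; rewrite dr0 => /eqP; rewrite normr_eq0 subr_eq0 => /eqP ->.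
exact: normr_ge0.
Qed.


Lemma qf_expand n m (psi : 'M[C]_n -> 'M[C]_m) (g : 'M[C]_m -> 'M[C]_m) v :
  is_linear_map g ->
  qf (blk (fun i j => g (psi (delta_mx i j)))) v =
  \sum_i \sum_p \sum_j \sum_q \sum_k \sum_l
    ((v (mxtens_index (i, p)) 0)^* * psi (delta_mx i j) k l *
      v (mxtens_index (j, q)) 0) * g (delta_mx k l) p q.
Proof.
move=> Hg; rewrite qf_blk; apply: eq_bigr => i _; apply: eq_bigr => p _.
apply: eq_bigr => j _; apply: eq_bigr => q _.
rewrite [X in g X]matrix_sum_delta (lin_sum Hg) summxE mulr_sumr mulr_suml.
apply: eq_bigr => k _; rewrite (lin_sum Hg) summxE mulr_sumr mulr_suml.
by apply: eq_bigr => l _; rewrite (linZ Hg) mxE; ring.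
Qed.

Lemma norm_sum_le (I : finType) (f g K : I -> C) e :
  (forall i, `|f i - g i| <= K i * e) ->
  `|\sum_i f i - \sum_i g i| <= (\sum_i K i) * e.
Proof.
move=> H; rewrite -sumrB mulr_suml; apply: le_trans (ler_norm_sum _ _ _) _.
by apply: ler_sum => i _; apply: H.
Qed.

Lemma posA_SH n m (psi : 'M[C]_n -> 'M[C]_m) alpha :
  is_linear_map psi -> positive_map psi -> SH alpha ->
  forall v, 0 <= qf (blk (fun i j => alpha (psi (delta_mx i j)))) v.
Proof.
move=> Hl Hp [Ha Happ] v; rewrite (qf_expand _ _ Ha).
apply: (@approx_ge0 _ (\sum_i \sum_p \sum_j \sum_q \sum_k \sum_l
    `|(v (mxtens_index (i, p)) 0)^* * psi (delta_mx i j) k l *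
      v (mxtens_index (j, q)) 0|)).
  by do 6 (apply: sumr_ge0 => ? _); apply: normr_ge0.
move=> eps he; have [beta [hb hclose]] := Happ eps he.
exists (qf (blk (fun i j => beta (psi (delta_mx i j)))) v); split.
  exact: (posA Hl Hp hb).
rewrite (qf_expand _ _ (gen_lin hb)).
do 6 (apply: norm_sum_le => ?).
rewrite -mulrBr normrM; apply: ler_wpM2l; first exact: normr_ge0.
exact: ltW.
Qed.


Lemma qf_sum p (u : 'cV[C]_p) (I : Type) (r : seq I) (P : pred I) (X : I -> 'M[C]_p) :
  qf (\sum_(i <- r | P i) X i) u = \sum_(i <- r | P i) qf (X i) u.
Proof. exact: (slin_sum (f := fun M => qf M u) (fun a x y => qf_lin u a x y)). Qed.

Lemma qfZ p (u : 'cV[C]_p) a X : qf (a *: X) u = a * qf X u.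
Proof. exact: (slinZ (f := fun M => qf M u) (fun a x y => qf_lin u a x y)). Qed.

Lemma qf1_ge0 p (u : 'cV[C]_p) : 0 <= qf 1%:M u.
Proof.
rewrite /qf mulmx1 mxE; apply: sumr_ge0 => i _.
by rewrite !mxE mulrC mul_conjC_ge0.
Qed.

Lemma qf_u0 p (u : 'cV[C]_p) : qf 1%:M u = 0 -> u = 0.
Proof.
rewrite /qf mulmx1 mxE.
have Hnn : forall k : 'I_p, true -> 0 <= adjmx u 0 k * u k 0.
  by move=> k _; rewrite !mxE mulrC mul_conjC_ge0.
move/(psumr_eq0P Hnn) => H.
apply/matrixP => i j; rewrite ord1 mxE.
have := H i isT; rewrite !mxE => /eqP.
by rewrite mulf_eq0 conjC_eq0 orbb => /eqP.
Qed.

Lemma qf_0 p (M : 'M[C]_p) : qf M 0 = 0.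
Proof. by rewrite /qf mulmx0 mxE. Qed.

Lemma ge0_eq (x y : C) : x = y -> 0 <= x -> 0 <= y.
Proof. by move=> ->. Qed.

Lemma posB n m (psi : 'M[C]_n -> 'M[C]_m) :
  is_linear_map psi -> PSH (choi psi) -> positive_map psi.
Proof.
case: m psi => [|m] psi Hl HP x hx; apply/psdP => u.
  by rewrite qfE big_ord0.
have hN := qf1_ge0 u.
set N := qf 1%:M u in hN.
have [N0|Nn0] := eqVneq N 0.
  by rewrite (qf_u0 N0) qf_0.
pose w (y : 'M[C]_m.+1) := qf y u / N.
have ws : is_state w.
  split; first by move=> c y z; rewrite /w qf_lin mulrDl mulrA.
  split; last by rewrite /w divff.
  by move=> y /psdP hy; rewrite /w divr_ge0.
pose a := delta_mx (ord0 : 'I_m.+1) ord0 : 'M[C]_m.+1.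
have ha : psd a.
  apply/psdP => v; rewrite qfE.
  rewrite (eq_bigr (fun i => \sum_j a i j * ((v i 0)^* * v j 0))); last first.
    by move=> i _; apply: eq_bigr => j _; ring.
  by rewrite sum_delta2 mulrC mul_conjC_ge0.
pose alpha y := w y *: a.
have hS : SH alpha.
  split; first by move=> c y z; rewrite /alpha (proj1 ws) scalerDl scalerA.
  move=> eps he; exists alpha; split.
    exists 1%N, (fun _ => w), (fun _ => a); split=> //; split=> // y.
    by rewrite big_ord1.
  by move=> k l p q; rewrite subrr normr0 ltcR.
have HW : psd (blk (fun i j => alpha (psi (delta_mx i j)))).
  by rewrite -id_tens_blk; apply: HP.
pose W i j := w (psi (delta_mx i j)).
have hW : forall c, 0 <= \sum_i \sum_j (c i)^* * W i j * c j.
  move=> c; apply: (ge0_eq _ ((psdP _).1 HW (\col_l c (@mxtens_unindex n m.+1 l).1))).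
  rewrite qf_blk; apply: eq_bigr => i _.
  rewrite exchange_big; apply: eq_bigr => j _.
  rewrite (eq_bigr (fun p => \sum_q a p q * ((c i)^* * W i j * c j))).
    by rewrite sum_delta2.
  move=> p _; apply: eq_bigr => q _; by rewrite !mxE !mxtens_indexK /= /W; ring.
have -> : qf (psi x) u = N * \sum_i \sum_j x i j * W i j.
  rewrite [X in psi X]matrix_sum_delta (lin_sum Hl) qf_sum mulr_sumr.
  apply: eq_bigr => i _; rewrite (lin_sum Hl) qf_sum mulr_sumr.
  apply: eq_bigr => j _; rewrite (linZ Hl) qfZ /W /w.
  by field.
apply: mulr_ge0 => //.
apply: (ge0_eq _ (schur (fun i p => (i == p)%:R) hW hx)).
apply: eq_bigr => i _; rewrite exchange_big; apply: eq_bigr => j _.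
rewrite -[RHS](sum_delta2 (fun p q => x p q * W i j)).
apply: eq_bigr => p _; apply: eq_bigr => q _.
rewrite mxE conjC_nat (eq_sym i) (eq_sym j).
by case: (p == i); case: (q == j); rewrite /= ?mul1r ?mulr1 ?mul0r ?mulr0 // mulrC.
Qed.


Lemma psd_tr p (x : 'M[C]_p) : psd x -> psd x^T.
Proof.
move=> /psdP hx; apply/psdP => v.
apply: (ge0_eq _ (hx (map_mx Num.conj v))).
rewrite !qfE exchange_big; apply: eq_bigr => i _; apply: eq_bigr => j _.
by rewrite !mxE conjCK; ring.
Qed.

Lemma tr_lin n m (phi : 'M[C]_n -> 'M[C]_m) :
  is_linear_map phi -> is_linear_map (transpose_map phi).
Proof. by move=> Hl a x y; rewrite /transpose_map linearP /= Hl linearP. Qed.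

Lemma tr_pos n m (phi : 'M[C]_n -> 'M[C]_m) :
  positive_map phi -> positive_map (transpose_map phi).
Proof. by move=> Hp x hx; apply: psd_tr; apply: Hp; apply: psd_tr. Qed.

Lemma tr_tr n m (phi : 'M[C]_n -> 'M[C]_m) x :
  transpose_map (transpose_map phi) x = phi x.
Proof. by rewrite /transpose_map !trmxK. Qed.

Lemma main n m (psi : 'M[C]_n -> 'M[C]_m) :
  is_linear_map psi -> (positive_map psi <-> PSH (choi psi)).
Proof.
move=> Hl; split; last exact: posB.
move=> Hp alpha hS.
change (psd (id_tens alpha (blk (fun i j => psi (delta_mx i j))))).
by rewrite id_tens_blk; apply/psdP; move=> v; exact: (posA_SH Hl Hp hS).
Qed.

Lemma sum_delta2M n m (B : 'I_n -> 'I_n -> 'M[C]_m) i j :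
  \sum_k \sum_l delta_mx i j k l *: B k l = B i j.
Proof.
apply/matrixP => p q; rewrite summxE.
rewrite -(sum_delta2 (fun k l => B k l p q) i j).
by apply: eq_bigr => k _; rewrite summxE; apply: eq_bigr => l _; rewrite mxE.
Qed.

End Work.

Unset Implicit Arguments.
Set Strict Implicit.

Theorem lemma2p2 (R : rcfType) (n m : nat) :
  (forall phi : 'M[R[i]]_n -> 'M[R[i]]_m, is_linear_map phi ->
     (positive_map phi <-> PSH (choi (transpose_map phi))) /\
     (positive_map phi <-> PSH (choi phi))) /\
  (forall x : 'M[R[i]]_(n * m),
     PSH x <-> exists phi : 'M[R[i]]_n -> 'M[R[i]]_m,
                 [/\ is_linear_map phi, positive_map phi & x = choi phi]).
Proof.
split.
  move=> phi Hl; split; last exact: main.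
  rewrite -(main (tr_lin Hl)); split; first exact: tr_pos.
  by move=> /tr_pos Hp x hx; rewrite -tr_tr; apply: Hp.
move=> x; split; last by case=> phi [Hl Hp ->]; apply/main.
move=> Hx.
pose phi (y : 'M[R[i]]_n) := \sum_i \sum_j y i j *: block x i j.
have Hl : is_linear_map phi.
  move=> a y z; rewrite /phi scaler_sumr -big_split; apply: eq_bigr => i _.
  rewrite scaler_sumr -big_split; apply: eq_bigr => j _.
  by rewrite !mxE scalerDl scalerA.
have Ex : x = choi phi.
  rewrite -[LHS]blk_block; apply: eq_bigr => i _; apply: eq_bigr => j _.
  by rewrite /phi sum_delta2M.
by exists phi; split => //; apply/main => //; rewrite -Ex.
Qed.
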